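(* A topological space $X$ is $K^\theta$-compact if and only if it is w-compact.
   Context: $\mathsf{Top}$ is the category of topological spaces and continuous maps; $\mathsf{Tych}$ its full subcategory of Tychonoff spaces. For a space $X$, let $\mathbb I=[0,1]$, $\Phi_X:X\to\mathbb I^{C(X,\mathbb I)}$, $x\mapsto(f(x))_f$, and $\tau X=\Phi_X(X)$ (subspace topology); $\theta_X:X\to\tau X$ is the induced surjection, which is the reflection of $X$ into $\mathsf{Tych}$ (Tychonoff functor). Subobjects of a space are its subsets with the subspace topology. The closure operator $K^\theta$ on $\mathsf{Top}$ is defined by $K^\theta_X(S)=\theta_X^{-1}\big(\overline{\theta_X(S)}\big)$ for $S\subseteq X$, where the bar denotes topological closure in $\tau X$. A space $X$ is $K^\theta$-compact if for every space $Y$ and every subset $S\subseteq X\times Y$, $\pi_Y(K^\theta_{X\times Y}(S))=K^\theta_Y(\pi_Y(S))$, where $\pi_Y:X\times Y\to Y$ is the projection. A cozero-set of $X$ is a set $\{x: g(x)>0\}$ for some continuous $g:X\to\mathbb I$; a zero-set is $\{x: f(x)=0\}$ for continuous $f:X\to\mathbb I$. A subset is $\tau$-open if it is a union of cozero-sets. $X$ is w-compact (Ishii) if for every family $\{P_\lambda\}$ of $\tau$-open subsets of $X$ with the finite intersection property, $\bigcap_\lambda\overline{P_\lambda}\ne\emptyset$ (closures in $X$). *)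

(* Defs.v *)
From HB Require Import structures.
From mathcomp Require Import all_boot all_order all_algebra.
From mathcomp Require Import all_classical all_reals all_analysis.
Set Implicit Arguments. Unset Strict Implicit. Unset Printing Implicit Defensive.
Import Order.TTheory GRing.Theory Num.Theory.
Import numFieldTopology.Exports.
Local Open Scope classical_set_scope.
Local Open Scope ring_scope.

Section Tych.
Variable R : realType.

Definition unitI : topologicalType := set_type [set x : R | 0 <= x <= 1].

Definition CXI (X : topologicalType) : Type := {f : X -> unitI | continuous f}.

Definition cube (X : topologicalType) : topologicalType :=
  prod_topology (fun _ : CXI X => unitI).

Definition PhiX (X : topologicalType) (x : X) : cube X :=
  fun f => proj1_sig f x.

Definition tauX (X : topologicalType) : topologicalType := set_type (range (@PhiX X)).

Definition thetaX (X : topologicalType) (x : X) : tauX X :=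
  SigSub (mem_set (imageT (@PhiX X) x)).

Definition Ktheta (X : topologicalType) (S : set X) : set X :=
  (@thetaX X) @^-1` closure ((@thetaX X) @` S).

Definition Ktheta_compact (X : topologicalType) : Prop :=
  forall (Y : topologicalType) (S : set (X * Y)%type),
    (@snd X Y) @` (Ktheta S) = Ktheta ((@snd X Y) @` S).

Definition cozero (X : topologicalType) (C : set X) : Prop :=
  exists g : X -> R, continuous g /\ (forall x, 0 <= g x <= 1) /\
    C = [set x | 0 < g x].

Definition tau_open (X : topologicalType) (P : set X) : Prop :=
  exists F : set (set X), (forall C, F C -> cozero C) /\ P = \bigcup_(C in F) C.

Definition fip (X : Type) (L : Type) (P : L -> set X) : Prop :=
  forall D : set L, finite_set D -> \bigcap_(l in D) P l !=set0.

Definition w_compact (X : topologicalType) : Prop :=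
  forall (L : Type) (P : L -> set X),
    (forall l, tau_open (P l)) -> fip P ->
    \bigcap_(l in setT) closure (P l) !=set0.

End Tych.

(* Main.v *)
Require Import Defs.
From HB Require Import structures.
From mathcomp Require Import all_boot all_order all_algebra.
From mathcomp Require Import all_classical all_reals all_analysis.
From mathcomp Require Import lra.
Set Implicit Arguments. Unset Strict Implicit. Unset Printing Implicit Defensive.
Import Order.TTheory GRing.Theory Num.Theory.
Import numFieldTopology.Exports.
Local Open Scope classical_set_scope.
Local Open Scope ring_scope.

Lemma fin_ind (L : Type) (P : set L -> Prop) : P set0 ->
  (forall A x, finite_set A -> P A -> P (x |` A)) ->
  forall A, finite_set A -> P A.
Proof.
move=> P0 PS A /(@finite_seqP {classic L}) [s ->].
elim: s => [|x s IH]; first by rewrite set_nil.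
have -> : [set` (x :: s)] = x |` [set` s].
  apply/seteqP; split => y /=; rewrite inE; first by case/orP => [/eqP ->|]; [left|right].
  by case => [->|->]; rewrite ?eqxx // orbT.
by apply: PS => //; apply/(@finite_seqP {classic L}); exists s.
Qed.

Lemma eval_cont (I : Type) (K : I -> topologicalType) (i : I) :
  continuous (fun h : prod_topology K => h i).
Proof. exact: (@proj_continuous {classic I} K i). Qed.

Lemma cvg_initial (S : choiceType) (T : topologicalType) (w : S -> T)
  (F : set_system S) (s : S) : Filter F ->
  w @ F --> w s -> F --> (s : initial_topology w).
Proof.
move=> FF ws A /= [B [[C oC <-] Bs BA]].
apply: (filterS BA); apply: ws; exact: open_nbhs_nbhs.
Qed.

Lemma fin_nbhs (T : topologicalType) (p : T) (L : Type) (D : set L)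
  (B : L -> set T) : finite_set D -> (forall l, D l -> nbhs p (B l)) ->
  nbhs p (\bigcap_(l in D) B l).
Proof.
move=> fD; move: D fD; apply: fin_ind.
  by move=> _; rewrite bigcap_set0; exact: filterT.
move=> A x fA IH H; rewrite bigcap_setU1; apply: filterI.
  by apply: H; left.
by apply: IH => l Al; apply: H; right.
Qed.

Section S.
Variable R : realType.

Definition clip (t : R) : R := Num.max 0 (Num.min 1 t).

Lemma clip_cont (T : topologicalType) (g : T -> R) :
  continuous g -> continuous (fun t => clip (g t)).
Proof.
move=> cg x; rewrite /clip.
apply: (@continuous_max R T (fun _ => 0) (fun t => Num.min 1 (g t))).
  exact: cvg_cst.
apply: (@continuous_min R T (fun _ => 1) g); [exact: cvg_cst| exact: cg].
Qed.

Lemma clip01 t : 0 <= clip t <= 1.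
Proof.
rewrite /clip; apply/andP; split; first by rewrite le_max lexx.
by rewrite ge_max ler01 ge_min lexx.
Qed.

Lemma clip_gt0 t : (0 < clip t) = (0 < t).
Proof.
by rewrite /clip lt_max ltxx lt_min ltr01.
Qed.

Lemma cont_min (T : topologicalType) (f g : T -> R) :
  continuous f -> continuous g -> continuous (fun t => Num.min (f t) (g t)).
Proof. move=> cf cg x; exact: (@continuous_min R T f g x (cf x) (cg x)). Qed.

Lemma cont_dist (T : topologicalType) (f : T -> R) (c : R) :
  continuous f -> continuous (fun t => `|f t - c|).
Proof.
move=> cf t; apply: cvg_norm; apply: cvgB; [exact: cf | exact: cvg_cst].
Qed.

Lemma cont_csub (T : topologicalType) (c : R) (f : T -> R) :
  continuous f -> continuous (fun t => c - f t).
Proof. move=> cf t; apply: cvgB; [exact: cvg_cst | exact: cf]. Qed.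

Lemma cozero_gt0 (X : topologicalType) (g : X -> R) :
  continuous g -> cozero R [set x | 0 < g x].
Proof.
move=> cg; exists (fun t => clip (g t)); split; first exact: clip_cont.
split; first by move=> t; exact: clip01.
by apply/seteqP; split => t /=; rewrite clip_gt0.
Qed.

Lemma fin_comb (T : topologicalType) (L : Type) (D : set L)
  (g : L -> T -> R) (t0 : T) : finite_set D ->
  (forall l, D l -> continuous (g l) /\ 0 < g l t0) ->
  exists G : T -> R, [/\ continuous G, (forall t, 0 <= G t <= 1), 0 < G t0 &
     forall t, 0 < G t -> forall l, D l -> 0 < g l t].
Proof.
move=> fD; move: D fD; apply: fin_ind.
  move=> _; exists (fun _ => 1); split => //.
  - by move=> t; exact: cvg_cst.
  - by move=> t; rewrite ler01 lexx.
move=> A x fA IH H.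
have [G [cG G01 G0 GP]] : exists G : T -> R, [/\ continuous G, (forall t, 0 <= G t <= 1), 0 < G t0 &
     forall t, 0 < G t -> forall l, A l -> 0 < g l t].
  by apply: IH => l Al; apply: H; right.
have [cgx gx0] := H x (or_introl erefl).
exists (fun t => Num.min (G t) (clip (g x t))); split.
- by apply: cont_min => //; exact: clip_cont.
- move=> t; have /andP[a b] := G01 t; have /andP[c d] := clip01 (g x t).
  by rewrite le_min a c /= ge_min b.
- by rewrite lt_min G0 clip_gt0.
- move=> t; rewrite lt_min clip_gt0 => /andP[Gt gt] l [->//|Al].
  exact: GP.
Qed.

Lemma cube_eval_cont (X : topologicalType) (f : CXI R X) :
  continuous (fun p : tauX R X => sval ((sval p) f)).
Proof.
move=> p.
have h1 : {for p, continuous (fun p : tauX R X => (sval p : cube R X))}.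
  exact: initial_continuous.
have h2 := @eval_cont (CXI R X) (fun _ => unitI R) f (sval p).
have h3 : {for (sval p) f, continuous (fun u : unitI R => sval u)}.
  exact: initial_continuous.
exact: (continuous_comp (continuous_comp h1 h2) h3).
Qed.


Lemma KthetaP1 (X : topologicalType) (S : set X) (x : X) :
  Ktheta R S x -> forall g : X -> R, continuous g ->
  (forall t, 0 <= g t <= 1) -> 0 < g x -> exists2 s, S s & 0 < g s.
Proof.
move=> Kx g cg g01 gx.
pose gI : X -> unitI R := fun t => exist _ (g t) (mem_set (g01 t)).
have cgI : continuous gI.
  by apply: (@continuous_comp_initial _ _ _ set_val). 
pose f : CXI R X := exist _ gI cgI.
have N : nbhs (thetaX R x) [set p : tauX R X | 0 < sval ((sval p) f)].
  have := @cube_eval_cont X f (thetaX R x).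
  move/cvgrPdist_lt => /(_ (g x) gx).
  apply: filterS => p /= H.
  have : g x - sval (sval p f) < g x by apply: le_lt_trans H; exact: ler_norm.
  by rewrite ltrBlDl -ltrBlDr subrr.
have [p [[s Ss <-] /= Hp]] := Kx _ N.
by exists s.
Qed.


Lemma cvg_prodtop (I : Type) (K : I -> topologicalType)
  (F : set_system (prod_topology K)) (p : prod_topology K) : Filter F ->
  (forall i, (fun h => h i) @ F --> p i) -> F --> p.
Proof.
move=> FF H.
apply/(@cvg_sup (forall i, K i) I (fun i => Topological.class
    (initial_topology (fun f : (forall i, K i) => f i))) F p FF) => i.
exact: (@cvg_initial _ _ (fun f : (forall i, K i) => f i) F p FF (H i)).
Qed.

Lemma KthetaP2 (X : topologicalType) (S : set X) (x : X) :
  (forall g : X -> R, continuous g ->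
  (forall t, 0 <= g t <= 1) -> 0 < g x -> exists2 s, S s & 0 < g s) ->
  Ktheta R S x.
Proof.
move=> H.
pose Ig := [set g : X -> R | [/\ continuous g, (forall t, 0 <= g t <= 1) & 0 < g x]].
pose G := filter_from Ig (fun g => @thetaX R X @` (S `&` [set t | 0 < g t])).
have FG : Filter G.
  apply: filter_from_filter.
    exists (fun _ => 1); split => //; first by move=> t; exact: cvg_cst.
    by move=> t; rewrite ler01 lexx.
  move=> g1 g2 [c1 b1 p1] [c2 b2 p2].
  exists (fun t => Num.min (g1 t) (g2 t)).
    split; first exact: cont_min.
      move=> t; have /andP[a b] := b1 t; have /andP[c d] := b2 t.
      by rewrite le_min a c /= ge_min b.
    by rewrite lt_min p1 p2.
  move=> q [t [St]]; rewrite /= lt_min => /andP[t1 t2] <-.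
  by split; exists t.
have PG : ProperFilter G.
  apply: filter_from_proper => g [cg bg pg].
  have [s Ss gs] := H g cg bg pg.
  by exists (@thetaX R X s); exists s.
rewrite /Ktheta /=.
rewrite closureEcvg; exists G => //; split; last first.
  move=> A /= SA; exists (fun _ => 1).
    split => //; first by move=> t; exact: cvg_cst.
    by move=> t; rewrite ler01 lexx.
  by move=> q [t [St _] <-]; apply: SA; exists t.
apply: (@cvg_initial _ _ set_val G (@thetaX R X x) FG).
apply: cvg_prodtop => f.
apply: (@cvg_initial _ _ set_val _ _ (fmap_filter _ _)).
pose fv : X -> R := fun t => sval (sval f t).
have cfv : continuous fv.
  move=> t; apply: (continuous_comp (svalP f t)).
  exact: initial_continuous.
suff : (fun p : tauX R X => sval ((sval p) f)) @ G --> fv x by [].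
apply/cvgrPdist_lt => e e0.
exists (fun t => clip (e - `|fv t - fv x|)).
  split.
  - apply: clip_cont => t.
    have h1 : {for t, continuous (fun t => `|fv t - fv x|)}.
      exact: cont_dist.
    clear h1; move: t; apply: cont_csub; exact: cont_dist.
  - by move=> t; exact: clip01.
  - by rewrite clip_gt0 subrr normr0 subr0.
move=> q [t [St]]; rewrite /= clip_gt0 subr_gt0 => ht <-.
by rewrite distrC.
Qed.


End S.


Lemma cont_slice1 (R : realType) (X Y : topologicalType) (h : X * Y -> R) (y : Y) :
  continuous h -> continuous (fun x => h (x, y)).
Proof.
move=> ch x; apply: (@continuous_comp _ _ _ (fun x => (x, y)) h x _ (ch (x, y))).
by apply: cvg_pair; [exact: cvg_id | exact: cvg_cst].
Qed.

Lemma cont_slice2 (R : realType) (X Y : topologicalType) (h : X * Y -> R) (x : X) :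
  continuous h -> continuous (fun y => h (x, y)).
Proof.
move=> ch y; apply: (@continuous_comp _ _ _ (fun y => (x, y)) h y _ (ch (x, y))).
by apply: cvg_pair; [exact: cvg_cst | exact: cvg_id].
Qed.

Lemma equicont (R : realType) (X : topologicalType) (wX : w_compact R X)
  (Y : topologicalType) (h : X * Y -> R) (ch : continuous h) (y1 : Y)
  (e : R) (e0 : 0 < e) :
  exists2 B, nbhs y1 B & forall y, B y -> forall x, `|h (x, y) - h (x, y1)| < e.
Proof.
apply: contrapT => Hn.
pose IL := {B : set Y | nbhs y1 B}.
have Hc : forall B : IL, exists p : X * Y,
    sval B p.2 /\ e <= `|h p - h (p.1, y1)|.
  move=> [B nB]; apply: contrapT => Hp; apply: Hn; exists B => // y By x.
  rewrite ltNge; apply/negP => He; apply: Hp; exists (x, y); split => //.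
have [c cP] := choice Hc.
pose e4 := e / 4.
have e40 : 0 < e4 by rewrite divr_gt0.
pose U (j : IL) := [set x' | 0 < Num.min (e4 - `|h (x', (c j).2) - h (c j)|)
                                         (e4 - `|h (x', y1) - h ((c j).1, y1)|)].
pose P (i : IL) := [set x' | exists j : IL, sval j `<=` sval i /\ U j x'].
have tP : forall i, tau_open R (P i).
  move=> i; exists [set C | exists j : IL, sval j `<=` sval i /\ C = U j]; split.
    move=> C [j [_ ->]]; apply: cozero_gt0; apply: cont_min.
      apply: cont_csub; apply: cont_dist; exact: cont_slice1.
    apply: cont_csub; apply: cont_dist; exact: cont_slice1.
  apply/seteqP; split => x' /=.
    by move=> [j [ji Uj]]; exists (U j) => //; exists j.
  by move=> [C [j [ji ->]] Uj]; exists j.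
have fP : fip P.
  move=> D fD.
  have nB' := fin_nbhs fD (fun i _ => svalP i).
  pose j : IL := exist _ _ nB'.
  exists (c j).1 => i Di; exists j; split.
    exact: bigcap_inf.
  rewrite /U /= lt_min; case: (c j) => a b /=.
  by rewrite !subrr normr0 subr0 e40.
have [x Hx] := wX _ _ tP fP.
have := ch (x, y1); move/cvgrPdist_lt => /(_ e4 e40) [[A B] /= [nA nB] AB].
pose i : IL := exist _ B nB.
have [x' [[j [ji Uj]] Ax']] := Hx i I A nA.
have [pB pe] := cP j.
have h1 := AB (x', (c j).2) (conj Ax' (ji _ pB)).
have h2 := AB (x', y1) (conj Ax' (nbhs_singleton nB)).
move: Uj; rewrite /U /= lt_min !subr_gt0 => /andP[u1 u2].
move: pe; case: (c j) h1 u1 u2 => a b /= h1 u1 u2.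
rewrite /= in h1 h2.
move: h1 h2 u1 u2; rewrite !ltr_norml => /andP[h1 h1'] /andP[h2 h2'] /andP[u1 u1'] /andP[u2 u2'].
rewrite ler_normr => /orP[] ?; rewrite /e4 in h1 h1' h2 h2' u1 u1' u2 u2'; lra.
Qed.

Definition dsup (R : realType) (X Y : Type) (h : X * Y -> R) (y0 y : Y) : R :=
  sup [set `|h (x, y) - h (x, y0)| | x in [set: X]].

Lemma dsup_ub (R : realType) (X Y : Type) (h : X * Y -> R) (y0 : Y) :
  (forall z, 0 <= h z <= 1) ->
  forall y x, `|h (x, y) - h (x, y0)| <= dsup h y0 y.
Proof.
move=> h01 y x; apply: ub_le_sup; last by exists x.
exists 1 => r [x' _ <-].
have /andP[a b] := h01 (x', y); have /andP[c d] := h01 (x', y0).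
rewrite ler_norml; apply/andP; split; lra.
Qed.

Lemma dsup_le (R : realType) (X Y : Type) (h : X * Y -> R) (y0 y : Y) (x0 : X) (r : R) :
  (forall x, `|h (x, y) - h (x, y0)| <= r) -> dsup h y0 y <= r.
Proof.
move=> H; apply: ge_sup; first by exists `|h (x0, y) - h (x0, y0)|; exists x0.
by move=> t [x _ <-].
Qed.

Lemma dsup_cont (R : realType) (X : topologicalType) (wX : w_compact R X)
  (Y : topologicalType) (h : X * Y -> R) (ch : continuous h)
  (h01 : forall z, 0 <= h z <= 1) (x0 : X) (y0 : Y) :
  continuous (dsup h y0).
Proof.
move=> y1; apply/cvgrPdist_lt => e e0.
have e20 : 0 < e / 2 by rewrite divr_gt0.
have [B nB HB] := equicont wX ch y1 e20.
apply: filterS nB => y By.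
have u1 : dsup h y0 y <= dsup h y0 y1 + e / 2.
  apply: (dsup_le x0) => x.
  have := HB y By x; have := @dsup_ub _ _ _ h y0 h01 y1 x.
  rewrite ltr_norml ler_norml => /andP[a b] /andP[c d].
  rewrite ler_norml; apply/andP; split; lra.
have u2 : dsup h y0 y1 <= dsup h y0 y + e / 2.
  apply: (dsup_le x0) => x.
  have := HB y By x; have := @dsup_ub _ _ _ h y0 h01 y x.
  rewrite ltr_norml ler_norml => /andP[a b] /andP[c d].
  rewrite ler_norml; apply/andP; split; lra.
rewrite ltr_norml; apply/andP; split; lra.
Qed.

Lemma w_to_K (R : realType) (X : topologicalType) :
  w_compact R X -> Ktheta_compact R X.
Proof.
move=> wX Y S; apply/seteqP; split.
  move=> y [z Kz <-]; apply: KthetaP2 => g cg g01 gz.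
  have cgs : continuous (fun z : X * Y => g z.2).
    move=> w; apply: (@continuous_comp _ _ _ snd g w _ (cg w.2)).
    exact: cvg_snd.
  have [s Ss gs] := KthetaP1 Kz cgs (fun t => g01 t.2) gz.
  by exists s.2 => //; exists s.
move=> y0 Ky0.
have c1 : continuous (fun _ : Y => 1 : R) by move=> t; exact: cvg_cst.
have [y' [s0 Ss0 _] _] := KthetaP1 Ky0 c1
   (fun _ => ltac:(by rewrite ler01 lexx)) ltr01.
pose x0 := s0.1.
pose IL := {p : (X * Y -> R) * R |
  [/\ continuous p.1, (forall z, 0 <= p.1 z <= 1) & 0 < p.2]}.
pose P (i : IL) := [set x' | exists s, [/\ S s, dsup (sval i).1 y0 s.2 < (sval i).2
   & `|(sval i).1 (x', s.2) - (sval i).1 s| < (sval i).2]].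
have tP : forall i, tau_open R (P i).
  move=> i; exists [set C | exists s, [/\ S s, dsup (sval i).1 y0 s.2 < (sval i).2 &
    C = [set x' | 0 < (sval i).2 - `|(sval i).1 (x', s.2) - (sval i).1 s|]]]; split.
    move=> C [s [_ _ ->]]; apply: cozero_gt0.
    have [ci _ _] := svalP i.
    apply: cont_csub; apply: cont_dist; exact: cont_slice1.
  apply/seteqP; split => x' /=.
    move=> [s [Ss ds hs]]; exists [set x' | 0 < (sval i).2 - `|(sval i).1 (x', s.2) - (sval i).1 s|].
      by exists s.
    by rewrite /= subr_gt0.
  by move=> [C [s [Ss ds ->]]]; rewrite /= subr_gt0 => hs; exists s.
have fP : fip P.
  move=> D fD.
  have [G [cG G01 G0 GP]] := @fin_comb R Y IL D
    (fun i y => (sval i).2 - dsup (sval i).1 y0 y) y0 fD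
    ltac:(move=> i Di; have [ci bi pi] := svalP i; split;
      [apply: cont_csub; exact: (dsup_cont wX ci bi x0)
      | rewrite subr_gt0; apply: (le_lt_trans _ pi); apply: (dsup_le x0) => x;
        by rewrite subrr normr0]).
  have [y [s Ss <-] Gy] := KthetaP1 Ky0 cG G01 G0.
  exists s.1 => i Di; exists s; split => //.
    by have := GP _ Gy i Di; rewrite /= subr_gt0.
  have [_ _ pi] := svalP i.
  by case: s {Ss Gy} => a b /=; rewrite subrr normr0.
have [x Hx] := wX _ _ tP fP.
exists (x, y0) => //; apply: KthetaP2 => k ck k01 kx.
set c := k (x, y0) in kx.
have c40 : 0 < c / 4 by rewrite divr_gt0.
pose i : IL := exist _ (k, c / 4) (And3 ck k01 c40).
have nA := @cont_slice1 R X Y k y0 ck x.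
move/cvgrPdist_lt: nA => /(_ _ c40) nA.
have [x' [[s [Ss ds dk]] Ax']] := Hx i I _ nA.
exists s => //.
have := @dsup_ub _ _ _ k y0 k01 s.2 x'.
move: ds dk Ax' => /= ds dk Ax' du.
have du' : `|k (x', s.2) - k (x', y0)| < c / 4 by apply: le_lt_trans du ds.
move: dk Ax' du'; rewrite !ltr_norml => /andP[a b] /andP[d e] /andP[f g].
clear i; rewrite /c in a b d e f g c40 *; lra.
Qed.


Definition Ytop (L : Type) := option (set L).
HB.instance Definition _ (L : Type) := Choice.on (Ytop L).

Definition Yop (L : Type) : set_system (Ytop L) :=
  [set O | O None -> exists D0, finite_set D0 /\
     forall D, finite_set D -> D0 `<=` D -> O (Some D)].

Lemma Yop_T L : Yop [set: Ytop L].
Proof. by move=> _; exists set0; split => //; exact: finite_set0. Qed.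

Lemma Yop_I L : setI_closed (@Yop L).
Proof.
move=> A B oA oB [/oA [D1 [f1 H1]] /oB [D2 [f2 H2]]].
exists (D1 `|` D2); split; first by rewrite finite_setU.
move=> D fD sD; split.
  by apply: H1 => // l ?; apply: sD; left.
by apply: H2 => // l ?; apply: sD; right.
Qed.

Lemma Yop_bigU L (I : Type) (f : I -> set (Ytop L)) :
  (forall i, Yop (f i)) -> Yop (\bigcup_i f i).
Proof.
move=> H [i _ fi]; have [D0 [fD0 H0]] := H i fi.
by exists D0; split => // D fD sD; exists i => //; apply: H0.
Qed.

HB.instance Definition _ (L : Type) :=
  isOpenTopological.Build (Ytop L) (@Yop_T L) (@Yop_I L) (@Yop_bigU L).

Lemma Ytop_nbhs L (p : Ytop L) (A : set (Ytop L)) :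
  nbhs p A <-> exists B, [/\ Yop B, B p & B `<=` A].
Proof. by []. Qed.

Lemma K_to_w (R : realType) (X : topologicalType) :
  Ktheta_compact R X -> w_compact R X.
Proof.
move=> KX L P tP fP.
have [x0 _] := fP set0 (@finite_set0 L).
apply: contrapT => Hn.
have Hn' : forall u : X, exists p : L * set X, nbhs u p.2 /\ P p.1 `&` p.2 = set0.
  move=> u; apply: contrapT => H; apply: Hn; exists u => l _ A nA.
  apply/set0P/negP => /eqP E; apply: H; by exists (l, A).
have [la Hla] := choice Hn'.
have HF : forall D : set L, exists p : X * (X -> R),
   [/\ continuous p.2, (forall t, 0 <= p.2 t <= 1),
       (forall t, 0 < p.2 t -> forall l, D l -> P l t) &
       (finite_set D -> p.2 p.1 = 1)].
  move=> D; have [fD|nfD] := pselect (finite_set D); last first.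
    exists (x0, fun _ => 0); split => //=.
    - by move=> t; exact: cvg_cst.
    - by move=> t; rewrite lexx ler01.
    - by move=> t; rewrite ltxx.
  have [xD HxD] := fP D fD.
  have Hg : forall l, exists g : X -> R, D l ->
      [/\ continuous g, 0 < g xD & forall t, 0 < g t -> P l t].
    move=> l; have [Dl|nDl] := pselect (D l); last by exists (fun _ => 0).
    have [Fc [cF PE]] := tP l.
    have := HxD l Dl; rewrite {1}PE => -[C FC Cx].
    have [g [cg [g01 Ceq]]] := cF C FC.
    exists g => _; split => //; first by move: Cx; rewrite Ceq.
    by move=> t gt; rewrite PE; exists C => //; rewrite Ceq.
  have [g Hg'] := choice Hg.
  have [G [cG G01 G0 GP]] := @fin_comb R X L D g xD fD
    ltac:(by move=> l Dl; have [? ? _] := Hg' l Dl; split).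
  exists (xD, fun t => clip (G t / G xD)); split => /=.
  - apply: clip_cont => t; apply: cvgM; [exact: cG| exact: cvg_cst].
  - by move=> t; exact: clip01.
  - move=> t; rewrite clip_gt0 pmulr_lgt0 ?invr_gt0 // => Gt l Dl.
    by have [_ _ Hp] := Hg' l Dl; apply: Hp; apply: GP.
  - move=> _; rewrite divff ?gt_eqF //.
    by rewrite /clip minxx; apply/max_idPr; exact: ler01.
have [F HF'] := choice HF.
pose h : X * Ytop L -> R := fun z =>
  match z.2 with None => 0 | Some D => (F D).2 z.1 end.
have h01 : forall z, 0 <= h z <= 1.
  move=> [u y]; case: y => [D|] /=; last by rewrite lexx ler01.
  by have [_ b _ _] := HF' D; exact: b.
have ch : continuous h.
  move=> [u y]; case: y => [D|]; apply/cvgrPdist_lt => e e0.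
    have [cD _ _ _] := HF' D.
    have := cD u; move/cvgrPdist_lt => /(_ e e0) nA.
    exists ([set u' | `|(F D).2 u - (F D).2 u'| < e], [set Some D]); first split.
    - exact: nA.
    - by exists [set Some D]; split => // [[]].
    by case => u' y /= [Au ->].
  have [nA PA] := Hla u.
  pose l := (la u).1.
  exists ((la u).2, [set y : Ytop L | y = None \/ exists D, y = Some D /\ D l]); first split.
  - exact: nA.
  - exists [set y : Ytop L | y = None \/ exists D, y = Some D /\ D l]; split => //.
    + move=> _; exists [set l]; split; first exact: finite_set1.
      by move=> D _ sD; right; exists D; split => //; apply: sD.
    + by left.
  case => u' y /= [Au' [->|[D [-> Dl]]]]; first by rewrite /h /= subr0 normr0.
  rewrite /h /=.
  have [_ b Hs _] := HF' D.
  have : ~ 0 < (F D).2 u'.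
    move=> Hp; have := Hs _ Hp l Dl => Pl.
    by have : (P l `&` (la u).2) u' by []; rewrite PA.
  move/negP; rewrite -leNgt => H0.
  have /andP[H1 _] := b u'.
  have -> : (F D).2 u' = 0 by apply/eqP; rewrite eq_le H0 H1.
  by rewrite subr0 normr0.
pose S := [set z : X * Ytop L | exists D, finite_set D /\ z = ((F D).1, Some D)].
have KN : Ktheta R [set z.2 | z in S] (None : Ytop L).
  apply: KthetaP2 => g cg g01 g0.
  have := cg None; move/cvgrPdist_lt => /(_ _ g0) [B [oB BN sB]].
  have [D0 [fD0 HD0]] := oB BN.
  exists (Some D0); first by exists ((F D0).1, Some D0) => //; exists D0.
  have := sB _ (HD0 D0 fD0 (fun _ x => x)).
  rewrite ltr_norml => /andP[_ H]; lra.
move: KN; rewrite -(KX (Ytop L) S) => -[[x y] Kz /= yN].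
move: Kz; rewrite yN => Kz.
have ck : continuous (fun z => 1 - h z) by apply: cont_csub.
have [s [D [fD ->]] hs] := KthetaP1 Kz ck
  ltac:(move=> z; have /andP[a b] := h01 z; apply/andP; split; lra)
  ltac:(by rewrite /h /= subr0 ltr01).
move: hs; rewrite /h /=.
have [_ _ _ ->] := HF' D => //.
by rewrite subrr ltxx.
Qed.



Theorem theorem3p1 (R : realType) (X : topologicalType) :
  Ktheta_compact R X <-> w_compact R X.
Proof.
split; [exact: K_to_w | exact: w_to_K].
Qed.
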